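(* Assume the field with involution $(\mathbb{F},\sigma)$ satisfies: there exist $a,b\in\mathbb{F}$ with $\bar aa+\bar bb=-1$. Let $E=(E,q)$ be a non-degenerate formed space. Then the stable group $\operatorname{colim}_n G(E^{\oplus n})$ does not depend on the choice of $E$, up to group isomorphism.
   Context: Write $\bar c=\sigma(c)$; fix $\varepsilon$ with $\varepsilon\bar\varepsilon=1$ and $\Lambda$ with $\{c-\varepsilon\bar c\}\le\Lambda\le\{c:c+\varepsilon\bar c=0\}$. A form on a finite-dimensional $E$ is a sesquilinear map ($f(av,bw)=\bar af(v,w)b$) modulo those $f$ with $f(v,v)\in\Lambda$, $f(w,v)=-\varepsilon\overline{f(v,w)}$. Non-degenerate means $\{v:\omega_q(w,v)=0\ \forall w\}=0$ with $\omega_q(v,w)=q(v,w)+\varepsilon\overline{q(w,v)}$. $G(E)$ is the group of bijective linear maps $g$ with $q(g(-),g(-))=q$ as forms; $E^{\oplus n}$ has the direct sum form, and the colimit is along the maps $G(E^{\oplus n})\to G(E^{\oplus n+1})$ extending by the identity on the added summand. *)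

(* Defs.v *)
From HB Require Import structures.
From mathcomp Require Import all_boot all_order all_algebra.
Set Implicit Arguments. Unset Strict Implicit. Unset Printing Implicit Defensive.
Import Order.TTheory GRing.Theory Num.Theory.
Local Open Scope ring_scope.

Section Forms.
Variables (F : fieldType) (sig : F -> F) (eps : F) (Lam : {pred F}).

Definition sesqui_map (V : lmodType F) (f : V -> V -> F) : Prop :=
  (forall a u v w, f (a *: u + v) w = sig a * f u w + f v w) /\
  (forall b u v w, f u (b *: v + w) = f u v * b + f u w).

(* the subgroup of sesqui_map maps that represent the zero form *)
Definition null_form (V : lmodType F) (f : V -> V -> F) : Prop :=
  (forall v, f v v \in Lam) /\ (forall v w, f w v = - (eps * sig (f v w))).

Definition form_eq (V : lmodType F) (f g : V -> V -> F) : Prop :=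
  null_form (fun v w => f v w - g v w).

Definition omega (V : lmodType F) (q : V -> V -> F) (v w : V) : F :=
  q v w + eps * sig (q w v).

Definition nondeg_form (V : lmodType F) (q : V -> V -> F) : Prop :=
  forall v : V, (forall w, omega q w v = 0) -> v = 0.

Variables (V : vectType F) (q : V -> V -> F).

Definition dsum_form (n : nat) (v w : {ffun 'I_n -> V}) : F :=
  \sum_(i < n) q (v i) (w i).

Definition is_linear (U : lmodType F) (g : U -> U) : Prop :=
  forall a u v, g (a *: u + v) = a *: g u + g v.

Definition inG (n : nat) (g : {ffun 'I_n -> V} -> {ffun 'I_n -> V}) : Prop :=
  is_linear g /\ bijective g /\
  form_eq (fun v w => dsum_form (g v) (g w)) (@dsum_form n).

Definition restr (m n : nat) (v : {ffun 'I_m -> V}) : {ffun 'I_n -> V} :=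
  [ffun j : 'I_n => (match (insub (val j) : option 'I_m) with
                    | Some k => v k | None => 0 end : V)].

Definition ext (n m : nat) (g : {ffun 'I_n -> V} -> {ffun 'I_n -> V})
  (v : {ffun 'I_m -> V}) : {ffun 'I_m -> V} :=
  [ffun i : 'I_m => (match (insub (val i) : option 'I_n) with
                    | Some j => g (restr n v) j | None => v i end : V)].

(* representatives of elements of colim_n G(E^{(+)n}) *)
Record stab_rep := StabRep {
  level : nat;
  smap : {ffun 'I_level -> V} -> {ffun 'I_level -> V};
  smapP : inG smap }.

Definition stab_equiv (x y : stab_rep) : Prop :=
  let k := maxn (level x) (level y) in
  forall v : {ffun 'I_k -> V}, ext (@smap x) v = ext (@smap y) v.

Definition stab_mul (x y z : stab_rep) : Prop :=
  let k := maxn (level x) (maxn (level y) (level z)) in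
  forall v : {ffun 'I_k -> V}, ext (@smap z) v = ext (@smap x) (ext (@smap y) v).

End Forms.

(* a group isomorphism between the colimit groups, given on representatives:
   well defined and injective on classes, surjective, multiplicative *)
Definition stab_iso (F : fieldType) (sig : F -> F) (eps : F) (Lam : {pred F})
  (V1 V2 : vectType F) (q1 : V1 -> V1 -> F) (q2 : V2 -> V2 -> F)
  (phi : stab_rep sig eps Lam q1 -> stab_rep sig eps Lam q2) : Prop :=
  (forall x y, stab_equiv x y <-> stab_equiv (phi x) (phi y)) /\
  (forall y, exists x, stab_equiv (phi x) y) /\
  (forall x y z, stab_mul x y z -> stab_mul (phi x) (phi y) (phi z)).

(* Main.v *)
Require Import Defs.
From HB Require Import structures.
From mathcomp Require Import all_boot all_order all_algebra.
From mathcomp Require Import zify ring.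
Import GRing.Theory.
Local Open Scope ring_scope.

Set Implicit Arguments. Unset Strict Implicit. Unset Printing Implicit Defensive.

Section Gen.
Variables (F : fieldType) (sig : {rmorphism F -> F}).
Hypothesis sig_invol : forall x : F, sig (sig x) = x.
Variables (eps : F) (Lam : {pred F}).
Hypothesis heps : eps * sig eps = 1.
Hypothesis Lam0 : 0 \in Lam.
Hypothesis LamB : forall x y, x \in Lam -> y \in Lam -> x - y \in Lam.
Hypothesis Lam_min : forall c : F, c - eps * sig c \in Lam.

Lemma LamN x : x \in Lam -> - x \in Lam.
Proof. by move=> h; rewrite -sub0r; apply: LamB. Qed.
Lemma LamD x y : x \in Lam -> y \in Lam -> x + y \in Lam.
Proof. by move=> hx hy; rewrite -[y]opprK; apply: LamB => //; apply: LamN. Qed.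

Section NullU.
Variable U : lmodType F.
Notation null := (@null_form F sig eps Lam U).

Lemma null_ext (f g : U -> U -> F) : (forall v w, f v w = g v w) -> null f -> null g.
Proof. by move=> e [h1 h2]; split=> [v|v w]; rewrite -!e. Qed.

Lemma null0 : null (fun _ _ => 0).
Proof. by split=> // v w; rewrite rmorph0 mulr0 oppr0. Qed.

Lemma nullD f g : null f -> null g -> null (fun v w => f v w + g v w).
Proof.
move=> [f1 f2] [g1 g2]; split=> [v|v w]; first exact: LamD.
by rewrite f2 g2 rmorphD mulrDr opprD.
Qed.

Lemma nullN f : null f -> null (fun v w => - f v w).
Proof.
move=> [f1 f2]; split=> [v|v w]; first exact: LamN.
by rewrite f2 rmorphN mulrN.
Qed.

Lemma nullB f g : null f -> null g -> null (fun v w => f v w - g v w).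
Proof. by move=> hf hg; apply: nullD => //; apply: nullN. Qed.

Lemma null_eps (f : U -> U -> F) : null (fun v w => f v w - eps * sig (f w v)).
Proof.
split=> [v|v w]; first exact: Lam_min.
rewrite rmorphB rmorphM sig_invol mulrBr mulrA heps mul1r opprB.
by rewrite addrC.
Qed.
End NullU.

Lemma null_comp (U U' : lmodType F) (h : U' -> U) f :
  null_form sig eps Lam f -> null_form sig eps Lam (fun v w => f (h v) (h w)).
Proof. by move=> [f1 f2]; split=> [v|v w]; [apply: f1| apply: f2]. Qed.

Definition isom (U U' : lmodType F) (f : U -> U -> F) (f' : U' -> U' -> F)
  (T : U -> U') (T' : U' -> U) :=
  [/\ (forall a u v, T (a *: u + v) = a *: T u + T v), cancel T T', cancel T' T &
    form_eq sig eps Lam (fun u w => f' (T u) (T w)) f].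

Lemma isom_exact (U U' : lmodType F) f f' (T : U -> U') T' :
  (forall a u v, T (a *: u + v) = a *: T u + T v) -> cancel T T' -> cancel T' T ->
  (forall u w, f' (T u) (T w) = f u w) -> isom f f' T T'.
Proof.
move=> h1 h2 h3 h4; split=> //; apply: null_ext (null0 U) => v w.
by rewrite h4 subrr.
Qed.

Lemma lin_inv (U U' : lmodType F) (T : U -> U') T' :
  (forall a u v, T (a *: u + v) = a *: T u + T v) -> cancel T T' -> cancel T' T ->
  (forall a u v, T' (a *: u + v) = a *: T' u + T' v).
Proof.
move=> hl h2 h3 a u v; apply: (can_inj h2); by rewrite hl !h3.
Qed.

Lemma isom_sym (U U' : lmodType F) f f' (T : U -> U') T' :
  isom f f' T T' -> isom f' f T' T.
Proof.
move=> [hl h2 h3 h4]; split=> //; first exact: lin_inv.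
have := null_comp T' (nullN h4).
apply: null_ext => v w /=; rewrite !h3 opprB //.
Qed.

Lemma isom_trans (U U' U'' : lmodType F) f f' f'' (T : U -> U') T' (S : U' -> U'') S' :
  isom f f' T T' -> isom f' f'' S S' -> isom f f'' (S \o T) (T' \o S').
Proof.
move=> [hl h2 h3 h4] [kl k2 k3 k4]; split.
- by move=> a u v /=; rewrite hl kl.
- by move=> u /=; rewrite k2 h2.
- by move=> u /=; rewrite h3 k3.
have := nullD (null_comp T k4) h4.
by apply: null_ext => v w /=; rewrite addrA subrK.
Qed.

End Gen.
Set Implicit Arguments. Unset Strict Implicit. Unset Printing Implicit Defensive.

Section At.
Variables (F : fieldType) (V : vectType F).

Definition at_ (m : nat) (u : {ffun 'I_m -> V}) (i : nat) : V :=
  match (insub i : option 'I_m) with Some k => u k | None => 0 end.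
Definition fof (G : nat -> V) (m : nat) : {ffun 'I_m -> V} := [ffun o : 'I_m => G o].

Lemma atE m (u : {ffun 'I_m -> V}) (o : 'I_m) : at_ u o = u o.
Proof. by rewrite /at_ valK. Qed.

Lemma at_ge m (u : {ffun 'I_m -> V}) i : (m <= i)%N -> at_ u i = 0.
Proof. by move=> h; rewrite /at_ insubN // -leqNgt. Qed.

Lemma at_lt m (u : {ffun 'I_m -> V}) i (h : (i < m)%N) : at_ u i = u (Ordinal h).
Proof. by rewrite /at_ insubT. Qed.

Lemma at_inj m (u w : {ffun 'I_m -> V}) : (forall i, (i < m)%N -> at_ u i = at_ w i) -> u = w.
Proof. by move=> h; apply/ffunP=> o; rewrite -!atE h. Qed.

Lemma at_fof G m i : at_ (fof G m) i = if (i < m)%N then G i else 0.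
Proof. by case: ltnP => h; [rewrite at_lt ffunE | rewrite at_ge]. Qed.

Lemma at_lin m a (u w : {ffun 'I_m -> V}) i : at_ (a *: u + w) i = a *: at_ u i + at_ w i.
Proof.
case: (ltnP i m) => h; first by rewrite !(at_lt _ h) !ffunE.
by rewrite !at_ge // scaler0 addr0.
Qed.

Lemma at_restr m n (v : {ffun 'I_m -> V}) i :
  at_ (restr n v) i = if (i < n)%N then at_ v i else 0.
Proof.
case: ltnP => h; last by rewrite at_ge.
by rewrite (at_lt _ h) ffunE.
Qed.

Lemma at_ext n m (g : {ffun 'I_n -> V} -> {ffun 'I_n -> V}) (v : {ffun 'I_m -> V}) i :
  at_ (ext g v) i = if (i < m)%N then (if (i < n)%N then at_ (g (restr n v)) i else at_ v i) else 0.
Proof.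
case: (ltnP i m) => h; last by rewrite at_ge.
rewrite (at_lt _ h) ffunE /=; case: ltnP => h2.
  by rewrite insubT /= -(atE (g _)).
by rewrite insubN -?leqNgt // (at_lt _ h).
Qed.

Lemma restr_id n (v : {ffun 'I_n -> V}) : restr n v = v.
Proof. by apply: at_inj => i h; rewrite at_restr h. Qed.

Lemma restr_restr k m (u : {ffun 'I_k -> V}) : (k <= m)%N -> restr k (restr m u) = u.
Proof.
move=> km; apply: at_inj => i h; rewrite !at_restr h.
by rewrite (leq_trans h km).
Qed.

Lemma restr_restr2 n k m (u : {ffun 'I_m -> V}) : (n <= k)%N ->
  restr n (restr k u) = restr n u.
Proof.
move=> nk; apply: at_inj => i h; rewrite !at_restr h.
by rewrite (leq_trans h nk).
Qed.

Lemma restr_lin m n a (u w : {ffun 'I_m -> V}) :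
  restr n (a *: u + w) = a *: restr n u + restr n w.
Proof.
apply: at_inj => i h; rewrite at_lin !at_restr h at_lin //.
Qed.

Lemma ext_id n (g : {ffun 'I_n -> V} -> {ffun 'I_n -> V}) v : ext g v = g v.
Proof. by apply: at_inj => i h; rewrite at_ext h restr_id. Qed.

Lemma eq_ext n m (g g' : {ffun 'I_n -> V} -> {ffun 'I_n -> V}) (v : {ffun 'I_m -> V}) :
  (forall u, g u = g' u) -> ext g v = ext g' v.
Proof. by move=> e; apply: at_inj => i h; rewrite !at_ext e. Qed.

Lemma ext_ext n k m (g : {ffun 'I_n -> V} -> {ffun 'I_n -> V}) (v : {ffun 'I_m -> V}) :
  (n <= k)%N -> ext (ext g : {ffun 'I_k -> V} -> _) v = ext g v.
Proof.
move=> nk; apply: at_inj => i h; rewrite !at_ext h.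
case: (ltnP i k) => ik.
  by rewrite restr_restr2 // at_restr ik.
by rewrite ltnNge (leq_trans nk ik).
Qed.

Lemma restr_ext n m (g : {ffun 'I_n -> V} -> {ffun 'I_n -> V}) (v : {ffun 'I_m -> V}) :
  (n <= m)%N -> restr n (ext g v) = g (restr n v).
Proof.
move=> nm; apply: at_inj => i h; rewrite at_restr h at_ext h (leq_trans h nm) //.
Qed.

Lemma ext_restr n k m (g : {ffun 'I_n -> V} -> {ffun 'I_n -> V}) (u : {ffun 'I_k -> V}) :
  (n <= k)%N -> (k <= m)%N -> ext g (restr m u) = restr m (ext g u).
Proof.
move=> nk km; apply: at_inj => i h; rewrite at_ext h [RHS]at_restr h at_ext.
rewrite restr_restr2 ?(leq_trans nk km) //.
case: (ltnP i k) => ik; last by rewrite ltnNge (leq_trans nk ik) /= at_restr h at_ge.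
by rewrite at_restr h.
Qed.

Lemma ext_comp n m (g h : {ffun 'I_n -> V} -> {ffun 'I_n -> V}) (v : {ffun 'I_m -> V}) :
  (n <= m)%N -> ext (g \o h) v = ext g (ext h v).
Proof.
move=> nm; apply: at_inj => i hi; rewrite !at_ext hi /= restr_ext //.
case: ltnP => // ni; by rewrite at_ext hi ltnNge ni.
Qed.

Lemma ext_lin n m (g : {ffun 'I_n -> V} -> {ffun 'I_n -> V}) :
  (forall a u v, g (a *: u + v) = a *: g u + g v) ->
  forall a (u v : {ffun 'I_m -> V}), ext g (a *: u + v) = a *: ext g u + ext g v.
Proof.
move=> gl a u v; apply: at_inj => i hi; rewrite at_lin !at_ext hi restr_lin gl.
by case: ltnP; rewrite ?at_lin.
Qed.

Lemma equiv_lift nx ny k m (gx : {ffun 'I_nx -> V} -> _) (gy : {ffun 'I_ny -> V} -> _) :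
  (nx <= k)%N -> (ny <= k)%N -> (k <= m)%N ->
  (forall u : {ffun 'I_k -> V}, ext gx u = ext gy u) <->
  (forall v : {ffun 'I_m -> V}, ext gx v = ext gy v).
Proof.
move=> xk yk km; split=> h.
  move=> v; rewrite -(ext_ext (k:=k) gx v xk) -(ext_ext (k:=k) gy v yk).
  exact: eq_ext.
move=> u; rewrite -(restr_restr (ext gx u) km) -(restr_restr (ext gy u) km).
by rewrite -(ext_restr gx u xk km) -(ext_restr gy u yk km) h.
Qed.

Lemma mul_lift nx ny nz k m (gx : {ffun 'I_nx -> V} -> _) (gy : {ffun 'I_ny -> V} -> _)
  (gz : {ffun 'I_nz -> V} -> _) :
  (nx <= k)%N -> (ny <= k)%N -> (nz <= k)%N -> (k <= m)%N ->
  (forall u : {ffun 'I_k -> V}, ext gz u = ext gx (ext gy u)) <->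
  (forall v : {ffun 'I_m -> V}, ext gz v = ext gx (ext gy v)).
Proof.
move=> xk yk zk km; split=> h.
  move=> v; rewrite -(ext_ext (k:=k) gx _ xk) -(ext_ext (k:=k) gy v yk).
  rewrite -(ext_ext (k:=k) gz v zk) -ext_comp //.
  exact: eq_ext.
move=> u; rewrite -(restr_restr (ext gz u) km) -(restr_restr (ext gx (ext gy u)) km).
by rewrite -(ext_restr gz u zk km) -(ext_restr gx _ xk km) -(ext_restr gy u yk km) h.
Qed.

End At.
Set Implicit Arguments. Unset Strict Implicit. Unset Printing Implicit Defensive.

Section Blk.
Variables (F : fieldType).

Definition block (V : vectType F) (A j m : nat) (u : {ffun 'I_m -> V}) : {ffun 'I_A -> V} :=
  fof (fun s => at_ u (j * A + s)) A.

Definition blk (V1 V2 : vectType F) (A B : nat) (f : {ffun 'I_A -> V1} -> {ffun 'I_B -> V2})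
  (k : nat) (u : {ffun 'I_(A * k) -> V1}) : {ffun 'I_(B * k) -> V2} :=
  fof (fun i => at_ (f (block A (i %/ B) u)) (i %% B)) (B * k).

Arguments blk {V1 V2 A B} f k u.

Lemma at_block (V : vectType F) A j m (u : {ffun 'I_m -> V}) s : (s < A)%N ->
  at_ (block A j u) s = at_ u (j * A + s).
Proof. by move=> h; rewrite /block at_fof h. Qed.

Lemma block_eq (V : vectType F) A k (u w : {ffun 'I_(A * k) -> V}) :
  (forall j, (j < k)%N -> block A j u = block A j w) -> u = w.
Proof.
move=> h; apply: at_inj => i hi.
have A0 : (0 < A)%N by case: A u w h hi => //; rewrite mul0n.
have hj : (i %/ A < k)%N by rewrite ltn_divLR // mulnC.
have hs : (i %% A < A)%N by rewrite ltn_pmod.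
have e := divn_eq i A.
have := at_block (i %/ A) u hs; have := at_block (i %/ A) w hs.
by rewrite -e => <- <-; rewrite h.
Qed.

Lemma blk_block (V1 V2 : vectType F) A B f k (u : {ffun 'I_(A * k) -> V1}) j :
  (j < k)%N -> block B j (@blk V1 V2 A B f k u) = f (block A j u).
Proof.
move=> jk; apply: at_inj => s hs; rewrite at_block // /blk at_fof.
have -> : (j * B + s < B * k)%N by nia.
have -> : ((j * B + s) %/ B = j)%N by nia.
by rewrite modnMDl modn_small.
Qed.

Lemma block_lin (V : vectType F) A j m a (u w : {ffun 'I_m -> V}) :
  block A j (a *: u + w) = a *: block A j u + block A j w.
Proof. by apply: at_inj => s hs; rewrite at_lin !at_block // at_lin. Qed.

Lemma block_restr (V : vectType F) A j m n (w : {ffun 'I_m -> V}) :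
  (j.+1 * A <= n)%N -> block A j (restr n w) = block A j w.
Proof.
move=> h; apply: at_inj => s hs; rewrite !at_block // at_restr.
by have -> : (j * A + s < n)%N by nia.
Qed.

Lemma block_ext_lo (V : vectType F) A j n m (g : {ffun 'I_n -> V} -> _) (v : {ffun 'I_m -> V}) :
  (j.+1 * A <= n)%N -> (n <= m)%N -> block A j (ext g v) = block A j (g (restr n v)).
Proof.
move=> h nm; apply: at_inj => s hs; rewrite !at_block // at_ext.
have h1 : (j * A + s < n)%N by nia.
by rewrite h1 (leq_trans h1 nm).
Qed.

Lemma block_ext_hi (V : vectType F) A j n m (g : {ffun 'I_n -> V} -> _) (v : {ffun 'I_m -> V}) :
  (n <= j * A)%N -> block A j (ext g v) = block A j v.
Proof.
move=> h; apply: at_inj => s hs; rewrite !at_block // at_ext.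
have -> : (j * A + s < n)%N = false by apply/negbTE; rewrite -leqNgt; nia.
by case: ltnP => // hm; rewrite at_ge.
Qed.

Lemma blk_lin (V1 V2 : vectType F) A B (f : {ffun 'I_A -> V1} -> {ffun 'I_B -> V2}) k :
  (forall a u v, f (a *: u + v) = a *: f u + f v) ->
  forall a u v, blk f k (a *: u + v) = a *: blk f k u + blk f k v.
Proof.
move=> fl a u v; apply: block_eq => j jk.
by rewrite block_lin !blk_block // block_lin fl.
Qed.

Lemma blk_cancel (V1 V2 : vectType F) A B (f : {ffun 'I_A -> V1} -> {ffun 'I_B -> V2}) f' k :
  cancel f f' -> cancel (blk f k) (blk f' k).
Proof.
move=> c u; apply: block_eq => j jk; by rewrite !blk_block.
Qed.

Lemma dsum_nat (V : vectType F) (q : V -> V -> F) n (u w : {ffun 'I_n -> V}) :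
  dsum_form q u w = \sum_(0 <= i < n) q (at_ u i) (at_ w i).
Proof. by rewrite big_mkord; apply: eq_bigr => i _; rewrite !atE. Qed.

Lemma dsum_block (V : vectType F) (q : V -> V -> F) A k (u w : {ffun 'I_(A * k) -> V}) :
  dsum_form q u w = \sum_(0 <= j < k) dsum_form q (block A j u) (block A j w).
Proof.
rewrite dsum_nat.
have gen : forall k', (k' <= k)%N -> \sum_(0 <= i < A * k') q (at_ u i) (at_ w i) =
   \sum_(0 <= j < k') dsum_form q (block A j u) (block A j w).
  elim=> [|k' IH] hk; first by rewrite muln0 !big_geq.
  rewrite big_nat_recr //= -IH ?(ltnW hk) // mulnS addnC.
  rewrite (big_cat_nat _ (n := A * k')) //= ?leq_addr //; congr (_ + _).
  rewrite dsum_nat.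
  transitivity (\sum_(0 + A * k' <= i < A * k' + A) q (at_ u i) (at_ w i)); first by rewrite add0n.
  rewrite big_addn addKn.
  apply: eq_big_nat => s /andP[_ hs]; rewrite !at_block //.
  by have -> : (s + A * k' = k' * A + s)%N by lia.
exact: gen.
Qed.

End Blk.
Arguments blk {F V1 V2 A B} f k u.
Set Implicit Arguments. Unset Strict Implicit. Unset Printing Implicit Defensive.

Section Stab.
Variables (F : fieldType) (sig : {rmorphism F -> F}).
Hypothesis sig_invol : forall x : F, sig (sig x) = x.
Variables (eps : F) (Lam : {pred F}).
Hypothesis heps : eps * sig eps = 1.
Hypothesis Lam0 : 0 \in Lam.
Hypothesis LamB : forall x y, x \in Lam -> y \in Lam -> x - y \in Lam.
Hypothesis Lam_min : forall c : F, c - eps * sig c \in Lam.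

Notation null := (null_form sig eps Lam).
Notation sm x := (@smap _ _ _ _ _ _ x).

Lemma null_sum (U : lmodType F) (f : nat -> U -> U -> F) k :
  (forall j, null (f j)) -> null (fun v w => \sum_(0 <= j < k) f j v w).
Proof.
move=> h; elim: k => [|k IH].
  by apply: null_ext (null0 sig eps Lam0 U) => v w; rewrite big_geq.
apply: null_ext (nullD Lam0 LamB IH (h k)) => v w.
by rewrite big_nat_recr.
Qed.

Definition autf (U : lmodType F) (f : U -> U -> F) (g : U -> U) :=
  is_linear g /\ bijective g /\ form_eq sig eps Lam (fun v w => f (g v) (g w)) f.

Lemma conj_autf (U U' : lmodType F) f f' (S : U -> U') S' g :
  isom sig eps Lam f f' S S' -> autf f g -> autf f' (S \o g \o S').
Proof.
move=> [hl h2 h3 h4] [gl [[gi g1 g2] gf]]; split; last split.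
- by move=> a u v /=; rewrite (lin_inv hl h2 h3) gl hl.
- by exists (S \o gi \o S') => u /=; rewrite ?h2 ?g1 ?h3 ?g2 ?h2 ?h3.
have := nullD Lam0 LamB (nullD Lam0 LamB (null_comp (g \o S') h4) (null_comp S' gf))
   (nullN Lam0 LamB (null_comp S' h4)).
apply: null_ext => v w /=; rewrite !h3.
ring.
Qed.

Section OneV.
Variables (V : vectType F) (q : V -> V -> F).

Lemma dsum_split n m (u w : {ffun 'I_m -> V}) : (n <= m)%N ->
  dsum_form q u w = dsum_form q (restr n u) (restr n w) +
     \sum_(n <= i < m) q (at_ u i) (at_ w i).
Proof.
move=> nm; rewrite !dsum_nat (big_cat_nat _ (n := n)) //=; congr (_ + _).
by apply: eq_big_nat => i /andP[_ hi]; rewrite !at_restr hi.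
Qed.

Lemma ext_idf n m (g : {ffun 'I_n -> V} -> {ffun 'I_n -> V}) (v : {ffun 'I_m -> V}) :
  (forall x, g x = x) -> ext g v = v.
Proof.
move=> e; apply: at_inj => i h; rewrite at_ext h e at_restr.
by case: ltnP.
Qed.

Lemma ext_autf n m (g : {ffun 'I_n -> V} -> {ffun 'I_n -> V}) :
  (n <= m)%N -> autf (@dsum_form F V q n) g ->
  autf (@dsum_form F V q m) (ext g).
Proof.
move=> nm [gl [[gi g1 g2] gf]]; split; last split.
- by move=> a u v; apply: ext_lin.
- by exists (ext gi) => u; rewrite -ext_comp //; apply: ext_idf => x /=.
have := null_comp (restr n : {ffun 'I_m -> V} -> _) gf.
apply: null_ext => v w /=.
rewrite (dsum_split (ext g v) _ nm) (dsum_split v w nm) !restr_ext //.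
have -> : \sum_(n <= i < m) q (at_ (ext g v) i) (at_ (ext g w) i) =
   \sum_(n <= i < m) q (at_ v i) (at_ w i).
  apply: eq_big_nat => i /andP[ni im]; rewrite !at_ext im ltnNge ni //.
by ring.
Qed.
End OneV.

Lemma equiv_at (V : vectType F) (q : V -> V -> F) (x y : stab_rep sig eps Lam q) m :
  (maxn (level x) (level y) <= m)%N ->
  stab_equiv x y <-> (forall v : {ffun 'I_m -> V}, ext (sm x) v = ext (sm y) v).
Proof. by move=> h; apply: equiv_lift => //; rewrite ?leq_maxl ?leq_maxr. Qed.

Lemma mul_at (V : vectType F) (q : V -> V -> F) (x y z : stab_rep sig eps Lam q) m :
  (maxn (level x) (maxn (level y) (level z)) <= m)%N ->
  stab_mul x y z <->
  (forall v : {ffun 'I_m -> V}, ext (sm z) v = ext (sm x) (ext (sm y) v)).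
Proof.
move=> h; apply: mul_lift => //; rewrite ?leq_maxl //.
  exact: leq_trans (leq_maxl _ _) (leq_maxr _ _).
exact: leq_trans (leq_maxr _ _) (leq_maxr _ _).
Qed.

Section Transfer.
Variables (V1 V2 : vectType F) (q1 : V1 -> V1 -> F) (q2 : V2 -> V2 -> F).
Variables (A B : nat) (T : {ffun 'I_A -> V1} -> {ffun 'I_B -> V2}) (T' : {ffun 'I_B -> V2} -> {ffun 'I_A -> V1}).
Hypothesis A0 : (0 < A)%N.
Hypothesis B0 : (0 < B)%N.
Hypothesis isoT : isom sig eps Lam (@dsum_form F V1 q1 A) (@dsum_form F V2 q2 B) T T'.

Lemma blk_isom k : isom sig eps Lam (@dsum_form F V1 q1 (A * k)) (@dsum_form F V2 q2 (B * k))
   (blk T k) (blk T' k).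
Proof.
case: isoT => hl h2 h3 h4; split.
- exact: blk_lin.
- exact: blk_cancel.
- exact: blk_cancel.
have := null_sum (f := fun j v w => dsum_form q2 (T (block A j v)) (T (block A j w)) -
   dsum_form q1 (block A j v) (block A j w)) k (fun j => null_comp (@block _ _ A j (A * k)) h4).
apply: null_ext => v w /=.
rewrite (dsum_block q1 v w) (dsum_block q2 (blk T k v) (blk T k w)) -sumrB.
by apply: eq_big_nat => j /andP[_ jk]; rewrite !blk_block.
Qed.

Lemma compat n0 n (h : {ffun 'I_(A * n0) -> V1} -> {ffun 'I_(A * n0) -> V1})
  (v : {ffun 'I_(B * n) -> V2}) : (n0 <= n)%N ->
  ext (blk T n0 \o h \o blk T' n0) v = blk T n (ext h (blk T' n v)).
Proof.
case: isoT => hl h2 h3 h4 nn.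
have Bn : (B * n0 <= B * n)%N by nia.
have An : (A * n0 <= A * n)%N by nia.
apply: block_eq => j jn; rewrite blk_block //.
case: (ltnP j n0) => jn0.
  have hb : (j.+1 * B <= B * n0)%N by nia.
  have ha : (j.+1 * A <= A * n0)%N by nia.
  rewrite block_ext_lo // block_ext_lo //= blk_block //.
  congr (T (block A j (h _))).
  apply: block_eq => j' jn'.
  have hb' : (j'.+1 * B <= B * n0)%N by nia.
  have ha' : (j'.+1 * A <= A * n0)%N by nia.
  rewrite block_restr // !blk_block // ?block_restr //.
  exact: leq_trans jn' nn.
have hb : (B * n0 <= j * B)%N by nia.
have ha : (A * n0 <= j * A)%N by nia.
by rewrite block_ext_hi // block_ext_hi // blk_block // h3.
Qed.

Definition phimap (x : stab_rep sig eps Lam q1) :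
  {ffun 'I_(B * level x) -> V2} -> {ffun 'I_(B * level x) -> V2} :=
  blk T (level x) \o @ext F V1 (level x) (A * level x) (sm x) \o blk T' (level x).

Arguments phimap : clear implicits.

Lemma phimapP x : inG sig eps Lam q2 (phimap x).
Proof.
apply: (conj_autf (blk_isom (level x))).
apply: ext_autf; first by rewrite leq_pmull.
exact: (smapP x).
Qed.

Arguments phimapP : clear implicits.

Definition phi (x : stab_rep sig eps Lam q1) : stab_rep sig eps Lam q2 :=
  @StabRep F sig eps Lam V2 q2 (B * level x) (phimap x) (phimapP x).

Lemma phi_ext x n (v : {ffun 'I_(B * n) -> V2}) : (level x <= n)%N ->
  ext (sm (phi x)) v = blk T n (@ext F V1 (level x) (A * n) (sm x) (blk T' n v)).
Proof.
move=> h; rewrite /= /phimap compat //; congr (blk T n _).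
by apply: ext_ext; rewrite leq_pmull.
Qed.

Theorem transfer : exists phi : stab_rep sig eps Lam q1 -> stab_rep sig eps Lam q2, stab_iso phi.
Proof.
have [hl h2 h3 h4] := isoT.
exists phi; split; [|split].
- move=> x y; set n := maxn (level x) (level y).
  rewrite (equiv_at (x:=x) (y:=y) (m := A * n)); last by rewrite leq_pmull.
  rewrite (equiv_at (x:=phi x) (y:=phi y) (m := B * n)); last by rewrite /= /n; nia.
  have hx : (level x <= n)%N by rewrite leq_maxl.
  have hy : (level y <= n)%N by rewrite leq_maxr.
  split=> H v.
    by rewrite !phi_ext // H.
  apply: (can_inj (blk_cancel (k:=n) h2)).
  have := H (blk T n v); rewrite !phi_ext // blk_cancel //.
- move=> y.
  pose g := blk T' (level y) \o @ext F V2 (level y) (B * level y) (sm y) \o blk T (level y).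
  have gP : inG sig eps Lam q1 g.
    apply: (conj_autf (isom_sym Lam0 LamB (blk_isom (level y)))).
    apply: ext_autf; first by rewrite leq_pmull.
    exact: (smapP y).
  exists (@StabRep F sig eps Lam V1 q1 (A * level y) g gP).
  apply/(equiv_at (m := B * (A * level y))); first by rewrite /= geq_max leqnn /= mulnA leq_pmull // muln_gt0 A0 B0.
  move=> v; rewrite phi_ext //= -compat; last by rewrite leq_pmull.
  rewrite -[RHS](ext_ext (k := B * level y)); last by rewrite leq_pmull.
  apply: eq_ext => u; rewrite /g /= !(blk_cancel (k:=level y) h3) //.
- move=> x y z; set k := maxn (level x) (maxn (level y) (level z)).
  rewrite (mul_at (x:=x) (y:=y) (z:=z) (m := A * k)); last by rewrite leq_pmull.
  rewrite (mul_at (x:=phi x) (y:=phi y) (z:=phi z) (m := B * k)); last by rewrite /= /k; nia.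
  have hx : (level x <= k)%N by rewrite leq_maxl.
  have hy : (level y <= k)%N by rewrite /k; lia.
  have hz : (level z <= k)%N by rewrite /k; lia.
  move=> H v; rewrite !phi_ext // blk_cancel // H //.
Qed.

End Transfer.

End Stab.
Set Implicit Arguments. Unset Strict Implicit. Unset Printing Implicit Defensive.

Section Sesq.
Variables (F : fieldType) (sig : {rmorphism F -> F}).
Hypothesis sig_invol : forall x : F, sig (sig x) = x.

Section OneU.
Variables (U : lmodType F) (Q : U -> U -> F).
Hypothesis hQ : sesqui_map sig Q.

Lemma sq0l w : Q 0 w = 0.
Proof.
case: hQ => h1 _; have := h1 1 0 0 w; rewrite scaler0 addr0 rmorph1 mul1r.
by move/eqP; rewrite -subr_eq0 opprD addrA subrr sub0r oppr_eq0 => /eqP.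
Qed.
Lemma sq0r w : Q w 0 = 0.
Proof.
case: hQ => _ h2; have := h2 1 w 0 0; rewrite scaler0 addr0 mulr1.
by move/eqP; rewrite -subr_eq0 opprD addrA subrr sub0r oppr_eq0 => /eqP.
Qed.
Lemma sqZl a u w : Q (a *: u) w = sig a * Q u w.
Proof. by case: hQ => h1 _; rewrite -[a *: u]addr0 h1 sq0l addr0. Qed.
Lemma sqZr a u w : Q w (a *: u) = Q w u * a.
Proof. by case: hQ => _ h2; rewrite -[a *: u]addr0 h2 sq0r addr0. Qed.
Lemma sqDl u v w : Q (u + v) w = Q u w + Q v w.
Proof. by case: hQ => h1 _; rewrite -[u]scale1r h1 rmorph1 mul1r scale1r. Qed.
Lemma sqDr u v w : Q w (u + v) = Q w u + Q w v.
Proof. by case: hQ => _ h2; rewrite -[u]scale1r h2 mulr1 scale1r. Qed.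
Lemma sqNl u w : Q (- u) w = - Q u w.
Proof. by rewrite -scaleN1r sqZl rmorphN1 mulN1r. Qed.
Lemma sqNr u w : Q w (- u) = - Q w u.
Proof. by rewrite -scaleN1r sqZr mulrN1. Qed.
Lemma sqBl u v w : Q (u - v) w = Q u w - Q v w.
Proof. by rewrite sqDl sqNl. Qed.
Lemma sqBr u v w : Q w (u - v) = Q w u - Q w v.
Proof. by rewrite sqDr sqNr. Qed.
Lemma sq_suml I (r : seq I) (P : pred I) (c : I -> F) (x : I -> U) w :
  Q (\sum_(i <- r | P i) c i *: x i) w = \sum_(i <- r | P i) sig (c i) * Q (x i) w.
Proof.
elim/big_rec2: _ => [|i y1 y2 _ <-]; first by rewrite sq0l.
by rewrite sqDl sqZl.
Qed.

Lemma sq_comb c1 c2 c3 c4 u w u' w' :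
  Q (c1 *: u + c2 *: w) (c3 *: u' + c4 *: w') =
  sig c1 * Q u u' * c3 + sig c1 * Q u w' * c4 + sig c2 * Q w u' * c3 + sig c2 * Q w w' * c4.
Proof. rewrite !sqDl !sqDr !sqZl !sqZr; ring. Qed.

(* quaternion trick *)
Variables (a b : F).
Hypothesis hab : sig a * a + sig b * b = -1.

Definition qM (z : U * U) : U * U :=
  (a *: z.1 + (- sig b) *: z.2, b *: z.1 + sig a *: z.2).
Definition qM' (z : U * U) : U * U :=
  ((- sig a) *: z.1 + (- sig b) *: z.2, b *: z.1 + (- a) *: z.2).

Definition pform (U1 U2 : lmodType F) (f : U1 -> U1 -> F) (g : U2 -> U2 -> F)
  (x y : U1 * U2) : F := f x.1 y.1 + g x.2 y.2.

Lemma comb_comb (c c' c1 c2 c3 c4 : F) (u w : U) :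
  c *: (c1 *: u + c2 *: w) + c' *: (c3 *: u + c4 *: w) =
  (c * c1 + c' * c3) *: u + (c * c2 + c' * c4) *: w.
Proof.
rewrite !scalerDr !scalerA !scalerDl.
by rewrite -!addrA; congr (_ + _); rewrite addrCA.
Qed.

Lemma comb_lin (c1 c2 al : F) (u w u' w' : U) :
  c1 *: (al *: u + u') + c2 *: (al *: w + w') =
  al *: (c1 *: u + c2 *: w) + (c1 *: u' + c2 *: w').
Proof.
rewrite !scalerDr !scalerA (mulrC c1) (mulrC c2) -!scalerA.
by rewrite -!addrA; congr (_ + _); rewrite addrCA.
Qed.

Lemma qM_lin al z z' : qM (al *: z + z') = al *: qM z + qM z'.
Proof. by rewrite /qM /=; congr (_, _); rewrite comb_lin. Qed.

Lemma qMK : cancel qM qM'.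
Proof.
case=> u w; rewrite /qM /qM' /= !comb_comb.
have -> : - sig a * a + - sig b * b = 1 by rewrite -[1]opprK -hab; ring.
have -> : - sig a * - sig b + - sig b * sig a = 0 by ring.
have -> : b * a + - a * b = 0 by ring.
have -> : b * - sig b + - a * sig a = 1.
  by rewrite -[1]opprK -hab; ring.
by rewrite !scale1r !scale0r addr0 add0r.
Qed.

Lemma qM'K : cancel qM' qM.
Proof.
case=> u w; rewrite /qM /qM' /= !comb_comb.
have -> : a * - sig a + - sig b * b = 1 by rewrite -[1]opprK -hab; ring.
have -> : a * - sig b + - sig b * - a = 0 by ring.
have -> : b * - sig a + sig a * b = 0 by ring.
have -> : b * - sig b + sig a * - a = 1.
  by rewrite -[1]opprK -hab; ring.
by rewrite !scale1r !scale0r addr0 add0r.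
Qed.

Lemma qM_form z z' : pform Q Q (qM z) (qM z') = - pform Q Q z z'.
Proof.
case: z z' => [u w] [u' w']; rewrite /pform /qM /= !sq_comb !rmorphN !sig_invol.
transitivity ((sig a * a + sig b * b) * (Q u u' + Q w w')); first ring.
by rewrite hab; ring.
Qed.

End OneU.
End Sesq.
Set Implicit Arguments. Unset Strict Implicit. Unset Printing Implicit Defensive.

Section Split.
Variables (F : fieldType) (sig : {rmorphism F -> F}).
Hypothesis sig_invol : forall x : F, sig (sig x) = x.
Variables (eps : F) (Lam : {pred F}).
Hypothesis heps : eps * sig eps = 1.
Hypothesis Lam0 : 0 \in Lam.
Hypothesis LamB : forall x y, x \in Lam -> y \in Lam -> x - y \in Lam.
Hypothesis Lam_min : forall c : F, c - eps * sig c \in Lam.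
Variables (V : vectType F) (q : V -> V -> F).
Hypothesis hq : sesqui_map sig q.
Hypothesis ndq : nondeg_form sig eps q.

Definition spl m n (v : {ffun 'I_(m + n) -> V}) : {ffun 'I_m -> V} * {ffun 'I_n -> V} :=
  (fof (at_ v) m, fof (fun i => at_ v (m + i)) n).
Definition spl' m n (z : {ffun 'I_m -> V} * {ffun 'I_n -> V}) : {ffun 'I_(m + n) -> V} :=
  fof (fun i => if (i < m)%N then at_ z.1 i else at_ z.2 (i - m)) (m + n).

Lemma spl_lin m n a u v : spl (m:=m) (n:=n) (a *: u + v) = a *: spl u + spl v.
Proof.
by congr (_, _); apply: at_inj => i hi; rewrite at_lin !at_fof hi ?at_lin.
Qed.

Lemma splK m n : cancel (@spl m n) (@spl' m n).
Proof.
move=> v; apply: at_inj => i hi; rewrite at_fof hi /=.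
case: ltnP => h; first by rewrite at_fof h.
rewrite at_fof; have -> : (i - m < n)%N by lia.
  by rewrite subnKC.
Qed.

Lemma spl'K m n : cancel (@spl' m n) (@spl m n).
Proof.
case=> a b; congr (_, _); apply: at_inj => i hi; rewrite !at_fof hi.
  by rewrite (leq_trans hi (leq_addr _ _)).
rewrite ltn_add2l hi ltnNge leq_addr /=.
by rewrite addKn.
Qed.

Lemma spl_form m n (v w : {ffun 'I_(m + n) -> V}) :
  pform (@dsum_form F V q m) (@dsum_form F V q n) (spl v) (spl w) = dsum_form q v w.
Proof.
rewrite /pform /= !dsum_nat [RHS](big_cat_nat _ (n := m)) ?leq_addr //=; congr (_ + _).
  by apply: eq_big_nat => i /andP[_ hi]; rewrite !at_fof hi.
transitivity (\sum_(0 + m <= i < m + n) q (at_ v i) (at_ w i)); last by rewrite add0n.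
rewrite big_addn addKn; apply: eq_big_nat => i /andP[_ hi].
by rewrite !at_fof hi (addnC i m).
Qed.

Lemma dsum_sesqui n : sesqui_map sig (@dsum_form F V q n).
Proof.
case: hq => h1 h2; split=> [a u v w|b u v w]; rewrite /dsum_form ?mulr_sumr ?mulr_suml -big_split /=;
  apply: eq_bigr => i _; rewrite !ffunE ?h1 ?h2 //.
Qed.

Lemma omega_sum n (w v : {ffun 'I_n -> V}) :
  omega sig eps (@dsum_form F V q n) w v = \sum_(i < n) omega sig eps q (w i) (v i).
Proof.
rewrite /omega /dsum_form rmorph_sum mulr_sumr -big_split //.
Qed.

Lemma dsum_nondeg n : nondeg_form sig eps (@dsum_form F V q n).
Proof.
move=> v h; apply/ffunP=> i; rewrite ffunE; apply: ndq => x.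
have := h [ffun j => if j == i then x else 0].
rewrite omega_sum (bigD1 i) //= ffunE eqxx big1 ?addr0 // => j ji.
rewrite ffunE (negbTE ji) /omega (sq0l hq) ?(sq0r hq) ?rmorph0 ?mulr0 ?addr0 //.
Qed.

End Split.
Set Implicit Arguments. Unset Strict Implicit. Unset Printing Implicit Defensive.

Definition hypf (F : fieldType) (sig : F -> F) (n : nat) (x y : 'rV[F]_n * 'rV[F]_n) : F :=
  \sum_(j < n) sig (x.1 0 j) * y.2 0 j.

Section Hyp.
Variables (F : fieldType) (sig : {rmorphism F -> F}).
Hypothesis sig_invol : forall x : F, sig (sig x) = x.
Variables (eps : F) (Lam : {pred F}).
Hypothesis heps : eps * sig eps = 1.
Hypothesis Lam0 : 0 \in Lam.
Hypothesis LamB : forall x y, x \in Lam -> y \in Lam -> x - y \in Lam.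
Hypothesis Lam_min : forall c : F, c - eps * sig c \in Lam.
Variables (W : vectType F) (Q : W -> W -> F).
Hypothesis hQ : sesqui_map sig Q.
Hypothesis ndQ : nondeg_form sig eps Q.

Local Notation om := (omega sig eps Q).

Lemma om_sesqui : sesqui_map sig om.
Proof.
case: hQ => h1 h2; split=> [a u v w|b u v w]; rewrite /omega ?h1 ?h2 ?rmorphD ?rmorphM;
  rewrite ?sig_invol; ring.
Qed.

Local Notation D := (\dim {:W}).
Local Notation e := (vbasis {:W}).

Definition Rf (z : W) : 'rV[F]_D := \row_j om e`_j z.
Lemma Rf_lin : linear Rf.
Proof.
move=> a u v; apply/rowP => j; rewrite !mxE (sqDr om_sesqui) (sqZr om_sesqui).
by rewrite mulrC.
Qed.
HB.instance Definition _ := GRing.isLinear.Build F W 'rV[F]_D *:%R Rf Rf_lin.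
Definition lR := linfun Rf.

Lemma om_expand x z : om x z = \sum_(j < D) sig (coord e j x) * om e`_j z.
Proof.
by rewrite {1}(coord_vbasis (memvf x)) (sq_suml om_sesqui).
Qed.

Lemma Q_expand x z : Q x z = \sum_(j < D) sig (coord e j x) * Q e`_j z.
Proof.
by rewrite {1}(coord_vbasis (memvf x)) (sq_suml hQ).
Qed.

Lemma Rf_inj : injective Rf.
Proof.
move=> z z' h; apply/eqP; rewrite -subr_eq0; apply/eqP; apply: ndQ => x.
rewrite om_expand big1 // => j _.
have /rowP/(_ j) := h; rewrite !mxE => hj.
rewrite (sqBr om_sesqui) hj subrr mulr0 //.
Qed.

Lemma lker_lR : lker lR == 0%VS.
Proof. by apply/lker0P => z z'; rewrite !lfunE; apply: Rf_inj. Qed.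

Lemma limg_lR : limg lR = fullv.
Proof.
apply/eqP; rewrite eqEdim subvf /= limg_dim_eq; last by rewrite (eqP lker_lR) capv0.
rewrite [X in (X <= _)%N]dimvf. move: (@dim_matrix F 1 D) => ->. lia.
Qed.

Definition Rinv (y : 'rV[F]_D) : W := (lR^-1)%VF y.

Lemma RfK : cancel Rf Rinv.
Proof. by move=> z; rewrite /Rinv -[Rf z]lfunE lker0_lfunK // lker_lR. Qed.
Lemma RinvK : cancel Rinv Rf.
Proof.
move=> y; rewrite -[Rf _]lfunE limg_lfunVK // limg_lR memvf //.
Qed.

Definition Cf (a : W) : 'rV[F]_D := \row_j coord e j a.
Definition Cinv (x : 'rV[F]_D) : W := \sum_(j < D) x 0 j *: e`_j.

Lemma CfK : cancel Cf Cinv.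
Proof.
move=> a; rewrite /Cinv [RHS](coord_vbasis (memvf a)).
by apply: eq_bigr => j _; rewrite mxE.
Qed.
Lemma CinvK : cancel Cinv Cf.
Proof.
move=> x; apply/rowP => j; rewrite mxE /Cinv coord_sum_free ?(basis_free (vbasisP _)) //.
Qed.
Lemma Cf_lin a u v : Cf (a *: u + v) = a *: Cf u + Cf v.
Proof. by apply/rowP => j; rewrite !mxE linearP. Qed.

Definition pQ (y : W) : W := Rinv (\row_j Q e`_j y).

Lemma pQP x y : om x (pQ y) = Q x y.
Proof.
rewrite om_expand Q_expand; apply: eq_bigr => j _; congr (_ * _).
by have /rowP/(_ j) := RinvK (\row_j Q e`_j y); rewrite !mxE.
Qed.

Lemma pQ_lin a u v : pQ (a *: u + v) = a *: pQ u + pQ v.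
Proof.
rewrite /pQ -(lin_inv Rf_lin RfK RinvK); congr Rinv.
by apply/rowP => j; rewrite !mxE (sqDr hQ) (sqZr hQ) mulrC.
Qed.

Definition PQ := pform Q (fun x y => - Q x y).
Definition HQ (x y : W * W) := om x.1 y.2.

Definition Phi (z : W * W) : W * W := (z.1 + pQ z.2, z.1 + pQ z.2 - z.2).
Definition Phi' (z : W * W) : W * W := (z.1 - pQ (z.1 - z.2), z.1 - z.2).
Definition Psi (z : W * W) : 'rV[F]_D * 'rV[F]_D := (Cf z.1, Rf z.2).
Definition Psi' (z : 'rV[F]_D * 'rV[F]_D) : W * W := (Cinv z.1, Rinv z.2).

Lemma pairZ (U1 U2 : lmodType F) a (u : U1) (v : U2) : a *: (u, v) = (a *: u, a *: v).
Proof. by []. Qed.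
Lemma pairD (U1 U2 : lmodType F) (u u' : U1) (v v' : U2) : (u, v) + (u', v') = (u + u', v + v').
Proof. by []. Qed.

Lemma isoPhi : isom sig eps Lam HQ PQ Phi Phi'.
Proof.
split.
- move=> a [u1 u2] [v1 v2]; rewrite /Phi !pairZ !pairD /= pQ_lin; congr (_, _).
    by rewrite scalerDr addrACA.
  by rewrite scalerBr scalerDr opprD [RHS]addrACA (addrACA (a *: u1)).
- by case=> a b; rewrite /Phi /Phi' /=; congr (_, _); rewrite subKr ?addrK.
- case=> u v; rewrite /Phi /Phi' /=; congr (_, _); first by rewrite subrK.
  by rewrite subrK opprB addrC subrK.
have := null_eps sig_invol heps Lam_min (fun x x' : W * W => Q x.2 x'.1 + Q (pQ x.2) x'.2).
apply: null_ext => -[a b] [a' b']; rewrite /PQ /HQ /pform /Phi /=.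
have hp := pQP b b'; rewrite /omega in hp.
have e1 : Q b (pQ b') = Q b b' - eps * sig (Q (pQ b') b) by rewrite -hp addrK.
rewrite !(sqDl hQ, sqBl hQ, sqDr hQ, sqBr hQ, sqNl hQ, sqNr hQ) e1 /omega !rmorphD.
ring.
Qed.

Lemma isoPsi : isom sig eps Lam HQ (hypf sig (n:=D)) Psi Psi'.
Proof.
apply: isom_exact => //.
- move=> a [u1 u2] [v1 v2]; rewrite /Psi /=; congr (_, _); first exact: Cf_lin.
  exact: Rf_lin.
- by case=> u v; rewrite /Psi /Psi' /= CfK RfK.
- by case=> u v; rewrite /Psi /Psi' /= CinvK RinvK.
case=> a b [a' b']; rewrite /hypf /HQ /Psi /= om_expand.
by apply: eq_bigr => j _; rewrite !mxE.
Qed.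

Lemma hyp_iso : isom sig eps Lam PQ (hypf sig (n:=D)) (Psi \o Phi') (Phi \o Psi').
Proof. have := isom_trans Lam0 LamB (isom_sym Lam0 LamB isoPhi) isoPsi. exact. Qed.

End Hyp.
Set Implicit Arguments. Unset Strict Implicit. Unset Printing Implicit Defensive.

Lemma dimf (F : fieldType) (V : vectType F) n : \dim {:{ffun 'I_n -> V}} = (n * \dim {:V})%N.
Proof. by rewrite !dimvf -[in RHS](card_ord n). Qed.

Section Assemble.
Variables (F : fieldType) (sig : {rmorphism F -> F}).
Hypothesis sig_invol : forall x : F, sig (sig x) = x.
Variables (eps : F) (Lam : {pred F}).
Hypothesis heps : eps * sig eps = 1.
Hypothesis Lam0 : 0 \in Lam.
Hypothesis LamB : forall x y, x \in Lam -> y \in Lam -> x - y \in Lam.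
Hypothesis Lam_min : forall c : F, c - eps * sig c \in Lam.
Variables (a b : F).
Hypothesis hab : sig a * a + sig b * b = -1.

Lemma hyp_cast n n' : n = n' -> exists T T',
  isom sig eps Lam (hypf sig (n:=n)) (hypf sig (n:=n')) T T'.
Proof.
move=> <-; exists id, id; apply: isom_exact => //.
Qed.

Section OneV.
Variables (V : vectType F) (q : V -> V -> F).
Hypothesis hq : sesqui_map sig q.
Hypothesis ndq : nondeg_form sig eps q.
Variable m : nat.

Local Notation W := {ffun 'I_(m + m) -> V}.
Local Notation X := {ffun 'I_((m + m) + (m + m)) -> V}.

Definition Nm (w : W) : W := spl' (qM sig a b (spl w)).
Definition Nm' (w : W) : W := spl' (qM' sig a b (spl w)).

Lemma spl'_form n n' z z' : dsum_form q (@spl' F V n n' z) (spl' z') =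
  pform (@dsum_form F V q n) (@dsum_form F V q n') z z'.
Proof. by rewrite -spl_form !spl'K. Qed.

Lemma spl'_lin n n' c z z' : @spl' F V n n' (c *: z + z') = c *: spl' z + spl' z'.
Proof.
apply: (lin_inv (T := @spl F V n n')); [exact: spl_lin | exact: (splK Lam0) | exact: spl'K].
Qed.

Lemma step1 : isom sig eps Lam (@dsum_form F V q ((m + m) + (m + m)))
  (pform (@dsum_form F V q (m + m)) (@dsum_form F V q (m + m))) (@spl F V _ _) (@spl' F V _ _).
Proof.
apply: (isom_exact sig eps Lam0); [exact: spl_lin | exact: (splK Lam0) | exact: spl'K | exact: spl_form].
Qed.

Lemma step2 : isom sig eps Lam
  (pform (@dsum_form F V q (m + m)) (@dsum_form F V q (m + m)))
  (pform (@dsum_form F V q (m + m)) (fun x y => - @dsum_form F V q (m + m) x y))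
  (fun z : W * W => (z.1, Nm z.2)) (fun z : W * W => (z.1, Nm' z.2)).
Proof.
apply: isom_exact => //.
- move=> c [u1 u2] [v1 v2] /=; congr (_, _).
  by rewrite /Nm spl_lin qM_lin spl'_lin.
- by case=> u v /=; rewrite /Nm /Nm' spl'K (qMK hab) (splK Lam0).
- by case=> u v /=; rewrite /Nm /Nm' spl'K (qM'K hab) (splK Lam0).
case=> u v [u' v']; rewrite /pform /= /Nm spl'_form.
rewrite (qM_form sig_invol (dsum_sesqui hq m) hab) spl_form opprK.
by [].
Qed.

Lemma stepall : exists T T', isom sig eps Lam (@dsum_form F V q ((m + m) + (m + m)))
  (hypf sig (n := \dim {:W})) T T'.
Proof.
have h3 := hyp_iso sig_invol heps Lam0 LamB Lam_min (dsum_sesqui hq (m + m))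
  (dsum_nondeg hq ndq (n := m + m)).
eexists; eexists.
have h12 := isom_trans Lam0 LamB step1 step2. have := isom_trans Lam0 LamB h12 h3. exact.
Qed.

End OneV.
End Assemble.
Unset Implicit Arguments.
Local Open Scope ring_scope.
Theorem theorem7p6 (F : fieldType) (sig : {rmorphism F -> F})
  (sig_invol : forall x : F, sig (sig x) = x)
  (eps : F) (heps : eps * sig eps = 1)
  (Lam : {pred F})
  (Lam0 : 0 \in Lam) (LamB : forall x y, x \in Lam -> y \in Lam -> x - y \in Lam)
  (Lam_min : forall c : F, c - eps * sig c \in Lam)
  (Lam_max : forall c : F, c \in Lam -> c + eps * sig c = 0)
  (hF : exists a b : F, sig a * a + sig b * b = -1)
  (V1 : vectType F) (q1 : V1 -> V1 -> F)
  (hq1 : sesqui_map sig q1) (nd1 : nondeg_form sig eps q1)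
  (hV1 : (0 < \dim (fullv : {vspace V1}))%N)
  (V2 : vectType F) (q2 : V2 -> V2 -> F)
  (hq2 : sesqui_map sig q2) (nd2 : nondeg_form sig eps q2)
  (hV2 : (0 < \dim (fullv : {vspace V2}))%N) :
  exists phi : stab_rep sig eps Lam q1 -> stab_rep sig eps Lam q2,
    stab_iso phi.
Proof.
case: hF => a [b hab].
set d1 := \dim {:V1}; set d2 := \dim {:V2}.
have [T1 [T1' iso1]] := stepall sig_invol heps Lam0 LamB Lam_min hab hq1 nd1 d2.
have [T2 [T2' iso2]] := stepall sig_invol heps Lam0 LamB Lam_min hab hq2 nd2 d1.
have edim : \dim {:{ffun 'I_(d2 + d2) -> V1}} = \dim {:{ffun 'I_(d1 + d1) -> V2}}.
  rewrite !dimf -/d1 -/d2; lia.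
have [C [C' isoC]] := hyp_cast sig eps Lam0 edim.
have isoT := isom_trans Lam0 LamB (isom_trans Lam0 LamB iso1 isoC) (isom_sym Lam0 LamB iso2).
apply: (transfer Lam0 LamB _ _ isoT).
  rewrite /d2 in hV2 *; lia.
rewrite /d1 in hV1 *; lia.
Qed.
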